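(* For every morphism $f:m\to n$ of $\mathsf{Syn}(\delta)$, the corelation $\Pi(f)$ lies in $\mathbf{FinCorel}^\circ$; that is, every equivalence class of $\Pi(f)$ contains exactly one element of $\underline{m}$ and at least one element of $\underline{n}$.
   Context: Write $\underline{m}=\{1,\dots,m\}$. $\mathsf{Syn}(\delta)$ is the free PROP (strict symmetric monoidal category with objects $\mathbb{N}$) on one generator $\delta:1\to2$, modelled graphically: a morphism $f:m\to n$ is an isomorphism class of finite directed acyclic graphs $G(f)$ with $m$ linearly ordered input half-edges, $n$ linearly ordered output half-edges, and finitely many internal vertices, each with exactly one incoming half-edge and an ordered pair of outgoing half-edges; composition glues outputs to inputs, tensor is disjoint union, symmetries are wire crossings (not vertices). $\Pi(f)$ (the ancestry partition) is the equivalence relation on $\underline{m}\sqcup\underline{n}$ in which $x\sim y$ iff the pendant vertices labelled $x,y$ lie in the same connected component of the underlying undirected graph of $G(f)$, where inputs are attached as pendant vertices labelled by $\underline{m}$ and outputs as pendant vertices labelled by $\underline{n}$. $\mathbf{FinCorel}^\circ$ is the set of equivalence relations $R$ on $\underline{m}\sqcup\underline{n}$ (corelations $m\to n$) such that (a) each class contains exactly one element of $\underline{m}$ and (b) each class contains at least one element of $\underline{n}$. *)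

(* Defs.v *)
From mathcomp Require Import all_boot.
Set Implicit Arguments. Unset Strict Implicit. Unset Printing Implicit Defensive.

(* A representative graph G(f) of a morphism f : m -> n of Syn(delta).
   - k internal vertices, each with one incoming half-edge and an ordered
     pair of outgoing half-edges (indexed by bool: false = first, true = second);
   - "sources" of wires: the m input half-edges, and the 2k outgoing
     half-edges of internal vertices;
   - "targets" of wires: the k incoming half-edges of internal vertices, and
     the n output half-edges;
   - [wire] assigns to every target half-edge the source half-edge it is
     glued to; it is a bijection (every half-edge is used exactly once);
   - acyclicity is witnessed by a rank function strictly increasing along
     every internal edge between vertices.
   Symmetries are wire crossings (encoded in the bijection), not vertices. *)
Record SynGraph (m n : nat) := {
  nverts : nat;
  wire : 'I_nverts + 'I_n -> 'I_m + ('I_nverts * bool);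
  wire_bij : bijective wire;
  rank : 'I_nverts -> nat;
  wire_acyclic : forall v : 'I_nverts,
      match wire (inl v) with
      | inr (u, _) => rank u < rank v
      | inl _ => true
      end
}.

Definition node m n (G : SynGraph m n) : finType :=
  ('I_m + 'I_n + 'I_(nverts G))%type.

Definition node_of_source m n (G : SynGraph m n)
  (s : 'I_m + ('I_(nverts G) * bool)) : node G :=
  match s with
  | inl i => inl (inl i)
  | inr (u, _) => inr u
  end.

Definition node_of_target m n (G : SynGraph m n)
  (t : 'I_(nverts G) + 'I_n) : node G :=
  match t with
  | inl v => inr v
  | inr j => inl (inr j)
  end.

Definition adj m n (G : SynGraph m n) : rel (node G) :=
  fun x y => [exists t,
    ((@node_of_source m n G (@wire m n G t) == x) && (@node_of_target m n G t == y)) ||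
    ((@node_of_source m n G (@wire m n G t) == y) && (@node_of_target m n G t == x))].

Definition pendant m n (G : SynGraph m n) (x : 'I_m + 'I_n) : node G := inl x.

Definition Pi m n (G : SynGraph m n) : rel ('I_m + 'I_n) :=
  fun x y => connect (@adj m n G) (@pendant m n G x) (@pendant m n G y).

Definition FinCorel_circ m n (R : rel ('I_m + 'I_n)) : Prop :=
  equivalence_rel R /\
  (forall x : 'I_m + 'I_n,
     (exists! i : 'I_m, R x (inl i)) /\ (exists j : 'I_n, R x (inr j))).

(* Main.v *)
Require Import Defs.
From mathcomp Require Import all_boot.
From mathcomp Require Import zify.
Set Implicit Arguments. Unset Strict Implicit. Unset Printing Implicit Defensive.

Section S.
Variables (m n : nat) (G : SynGraph m n).
Local Notation node := (node G).
Local Notation nos := (@node_of_source m n G).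
Local Notation nott := (@node_of_target m n G).
Local Notation e := (@adj m n G).

Definition isin (x : node) : bool := if x is inl (inl _) then true else false.

Definition parent (x : node) : node :=
  match x with
  | inl (inl _) => x
  | inl (inr j) => nos (wire (inr j))
  | inr v => nos (wire (inl v))
  end.

Definition par : rel node := fun x y => ~~ isin x && (y == parent x).

Lemma parent_tgt t : parent (nott t) = nos (wire t).
Proof. by case: t. Qed.

Lemma tgt_nin t : ~~ isin (nott t).
Proof. by case: t. Qed.

Lemma adj_sym : symmetric e.
Proof.
move=> x y; rewrite /adj; apply/existsP/existsP => -[t Ht]; exists t;
  by rewrite orbC.
Qed.

Lemma adjE x y : e x y ->
  (~~ isin y /\ parent y = x) \/ (~~ isin x /\ parent x = y).
Proof.
case/existsP=> t /orP[/andP[/eqP H1 /eqP H2]|/andP[/eqP H1 /eqP H2]].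
- by left; rewrite -H2 parent_tgt H1 tgt_nin.
- by right; rewrite -H2 parent_tgt H1 tgt_nin.
Qed.

Lemma par_adj x y : par x y -> e x y.
Proof.
case/andP=> Hx /eqP ->; apply/existsP.
case: x Hx => [[i|j]|v] //= _.
- by exists (inr j); rewrite !eqxx orbT.
- by exists (inl v); rewrite !eqxx orbT.
Qed.

Definition desc (i : 'I_m) (x : node) := connect par x (inl (inl i)).

Lemma connect_in (i : 'I_m) y : connect par (inl (inl i)) y -> y = inl (inl i).
Proof.
case/connectP=> [[|z p]] /=; first by move=> _ ->.
by rewrite /par /=.
Qed.

Lemma desc_step i x y : ~~ isin y -> parent y = x -> desc i y = desc i x.
Proof.
move=> Hy Hp; apply/idP/idP.
- case/connectP=> [[|z p]] /=.
    by move=> _ /= Ey; rewrite -Ey in Hy.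
  case/andP=> /andP[_ /eqP ->] Hpath Hl; rewrite -Hp.
  by apply/connectP; exists p.
- move=> Hx; apply: connect_trans Hx; apply: connect1.
  by rewrite /par Hy Hp eqxx.
Qed.

Lemma desc_adj i x y : e x y -> desc i x = desc i y.
Proof.
case/adjE=> [[Hy Hp]|[Hx Hp]].
- by rewrite (desc_step i Hy Hp).
- by rewrite (desc_step i Hx Hp).
Qed.

Lemma desc_connect i x y : connect e x y -> desc i x -> desc i y.
Proof.
case/connectP=> p; elim: p x => [|z p IH] x /=; first by move=> _ ->.
by case/andP=> Hxz Hp Hl Hx; apply: (IH z Hp Hl); rewrite -(desc_adj i Hxz).
Qed.

Lemma desc_internal v : exists i, desc i (inr v).
Proof.
suff H : forall d v, rank v < d -> exists i, desc i (inr v) by apply: (H (rank v).+1).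
elim=> // d IH {}v Hv.
have Hd : parent (inr v) = nos (wire (inl v)) by [].
have := wire_acyclic v.
case: (wire (inl v)) Hd => [i|[u b]] /= Hd Hr.
- by exists i; rewrite (desc_step _ (isT : ~~ isin (inr v)) Hd); apply: connect0.
- have [i Hi] := IH u (leq_trans Hr Hv).
  by exists i; rewrite (desc_step _ (isT : ~~ isin (inr v)) Hd).
Qed.

Lemma desc_all x : exists i, desc i x.
Proof.
case: x => [[i|j]|v]; last exact: desc_internal.
- by exists i; apply: connect0.
- have Hd : parent (inl (inr j)) = nos (wire (inr j)) by [].
  case E: (wire (inr j)) Hd => [i|[u b]] /= Hd.
  + by exists i; rewrite (desc_step _ (isT : ~~ isin (inl (inr j))) Hd); apply: connect0.
  + have [i Hi] := desc_internal u.
    by exists i; rewrite (desc_step _ (isT : ~~ isin (inl (inr j))) Hd).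
Qed.

Lemma desc_conn i x : desc i x -> connect e x (inl (inl i)).
Proof. by apply: connect_sub => a b /par_adj; apply: connect1. Qed.

Definition M := \max_(v : 'I_(nverts G)) rank v.

Lemma out_internal v : exists j, connect e (inr v) (inl (inr j)).
Proof.
suff H : forall d v, M - rank v < d -> exists j, connect e (inr v) (inl (inr j)) by apply: (H (M - rank v).+1).
elim=> // d IH {}v Hv.
case: (wire_bij G) => g gK Kg.
have Ew := Kg (inr (v, false)).
have Ha : e (inr v) (nott (g (inr (v, false)))).
  by apply/existsP; exists (g (inr (v, false))); rewrite Ew !eqxx.
case E: (g (inr (v, false))) Ha => [v'|j] /= Ha.
- have Hr := wire_acyclic v'. rewrite -E Ew in Hr.
  have Hm : rank v' <= M by apply: leq_bigmax.
  have [j Hj] : exists j, connect e (inr v') (inl (inr j)).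
    apply: IH. rewrite ltnS in Hv. apply: leq_trans Hv.
    rewrite /= in Hr; lia.
  by exists j; apply: connect_trans Hj; apply: connect1.
- by exists j; apply: connect1.
Qed.

Lemma out_input i : exists j, connect e (inl (inl i)) (inl (inr j)).
Proof.
case: (wire_bij G) => g gK Kg.
have Ew := Kg (inl i).
have Ha : e (inl (inl i)) (nott (g (inl i))).
  by apply/existsP; exists (g (inl i)); rewrite Ew !eqxx.
case E: (g (inl i)) Ha => [v'|j] /= Ha.
- have [j Hj] := out_internal v'.
  by exists j; apply: connect_trans Hj; apply: connect1.
- by exists j; apply: connect1.
Qed.

End S.

Theorem proposition2p11 (m n : nat) (G : SynGraph m n) : FinCorel_circ (Pi G).
Proof.
have Hs := sym_connect_sym (@adj_sym m n G).
split.
- move=> x y z; split; first exact: connect0.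
  move=> Hxy; rewrite /Pi; apply/idP/idP => H.
  + by apply: connect_trans H; rewrite Hs.
  + by apply: connect_trans Hxy H.
- move=> x.
  have [i Hi] := desc_all (pendant G x).
  have Hxi : Pi G x (inl i) by apply: desc_conn.
  split.
  + exists i; split => // i' Hi'.
    have := desc_connect Hi' Hi.
    by move/connect_in => [].
  + have [j Hj] := out_input G i.
    by exists j; apply: connect_trans Hj.
Qed.
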